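(* Let $\mathcal{A}$ be an arrangement of distinct lines in $\mathbb{P}^2_{\mathbb{C}}$. If $\mathcal{R}(I(\mathcal{A}))$ is disconnected (in the classical topology), then there exists a nonempty subarrangement $\mathcal{A}'\subset\mathcal{A}$ such that $|\operatorname{mult}(\mathcal{A}')\cap H|\ge 3$ for all $H\in\mathcal{A}'$.
   Context: $\operatorname{mult}(\mathcal{B})$ is the set of points of $\mathbb{P}^2$ lying on at least three lines of the arrangement $\mathcal{B}$. Lines are identified with points of $(\mathbb{P}^2)^*$ via their coefficients; $I(\mathcal{A})$ is the set of triples $\{i,j,k\}$ with $H_i\cap H_j\cap H_k\neq\emptyset$; $\mathcal{R}(I)=\{(H_1,\dots,H_n)\in((\mathbb{P}^2)^* )^n: H_i\ne H_j\ (i\ne j),\ \det(H_i,H_j,H_k)=0 \text{ iff } \{i,j,k\}\in I\}$, where $\det$ is the determinant of the coefficient rows. *)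

(* Defs.v *)
From Stdlib Require Import Reals.
Open Scope R_scope.

Definition C := (R * R)%type.
Definition C0 : C := (0, 0).
Definition Cadd (x y : C) : C := (fst x + fst y, snd x + snd y).
Definition Csub (x y : C) : C := (fst x - fst y, snd x - snd y).
Definition Cmul (x y : C) : C :=
  (fst x * fst y - snd x * snd y, fst x * snd y + snd x * fst y).

(* ---------- vectors of C^3 (coefficients of lines / coordinates of points) *)
Record vec3 := mkV { v0 : C; v1 : C; v2 : C }.

Definition vnz (v : vec3) : Prop := ~ (v0 v = C0 /\ v1 v = C0 /\ v2 v = C0).
Definition vscale (c : C) (v : vec3) : vec3 :=
  mkV (Cmul c (v0 v)) (Cmul c (v1 v)) (Cmul c (v2 v)).

(* u and v represent the same point of P^2 (resp. (P^2)^* ) *)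
Definition same_point (u v : vec3) : Prop :=
  exists c : C, c <> C0 /\ v = vscale c u.

Definition dot (u v : vec3) : C :=
  Cadd (Cadd (Cmul (v0 u) (v0 v)) (Cmul (v1 u) (v1 v))) (Cmul (v2 u) (v2 v)).
Definition on_line (p h : vec3) : Prop := dot p h = C0.

Definition det3 (u v w : vec3) : C :=
  Cadd (Csub (Cmul (v0 u) (Csub (Cmul (v1 v) (v2 w)) (Cmul (v2 v) (v1 w))))
             (Cmul (v1 u) (Csub (Cmul (v0 v) (v2 w)) (Cmul (v2 v) (v0 w)))))
       (Cmul (v2 u) (Csub (Cmul (v0 v) (v1 w)) (Cmul (v1 v) (v0 w)))).

(* ---------- arrangements: n lines H_0..H_{n-1}, given by representatives *)
Definition Config := nat -> vec3.

Definition is_arrangement (n : nat) (A : Config) : Prop :=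
  (forall i, (i < n)%nat -> vnz (A i)) /\
  (forall i j, (i < n)%nat -> (j < n)%nat -> i <> j -> ~ same_point (A i) (A j)).

Definition TripleSet := nat -> nat -> nat -> Prop.

Definition I_of (A : Config) : TripleSet :=
  fun i j k => exists p, vnz p /\ on_line p (A i) /\ on_line p (A j) /\ on_line p (A k).

(* R(I), as the (saturated) set of representatives in (C^3 \ 0)^n *)
Definition realization_space (n : nat) (I : TripleSet) (G : Config) : Prop :=
  (forall i, (i < n)%nat -> vnz (G i)) /\
  (forall i j, (i < n)%nat -> (j < n)%nat -> i <> j -> ~ same_point (G i) (G j)) /\
  (forall i j k, (i < n)%nat -> (j < n)%nat -> (k < n)%nat ->
     i <> j -> j <> k -> i <> k ->
     (det3 (G i) (G j) (G k) = C0 <-> I i j k)).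

(* ---------- classical topology on ((P^2)^* )^n, as a quotient topology *)
Definition Cclose (eps : R) (x y : C) : Prop :=
  Rabs (fst x - fst y) < eps /\ Rabs (snd x - snd y) < eps.
Definition vclose (eps : R) (u v : vec3) : Prop :=
  Cclose eps (v0 u) (v0 v) /\ Cclose eps (v1 u) (v1 v) /\ Cclose eps (v2 u) (v2 v).
Definition cfg_close (n : nat) (eps : R) (x y : Config) : Prop :=
  forall i, (i < n)%nat -> vclose eps (x i) (y i).

Definition cfg_open (n : nat) (U : Config -> Prop) : Prop :=
  forall x, U x -> exists eps, 0 < eps /\ forall y, cfg_close n eps x y -> U y.

(* invariant under rescaling each coordinate vector by a nonzero scalar,
   i.e. U is the preimage of a subset of ((P^2)^* )^n *)
Definition saturated (n : nat) (U : Config -> Prop) : Prop :=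
  forall (x : Config) (c : nat -> C), (forall i, (i < n)%nat -> c i <> C0) ->
    (U x <-> U (fun i => vscale (c i) (x i))).

(* S (a saturated set, i.e. a subset of ((P^2)^* )^n) is disconnected in the
   quotient (classical) topology *)
Definition disconnected (n : nat) (S : Config -> Prop) : Prop :=
  exists U V : Config -> Prop,
    cfg_open n U /\ cfg_open n V /\ saturated n U /\ saturated n V /\
    (forall x, S x -> U x \/ V x) /\
    (forall x, S x -> U x -> V x -> False) /\
    (exists x, S x /\ U x) /\ (exists x, S x /\ V x).

Definition in_mult (A : Config) (J : nat -> Prop) (p : vec3) : Prop :=
  vnz p /\ exists i j k, J i /\ J j /\ J k /\ i <> j /\ j <> k /\ i <> k /\
    on_line p (A i) /\ on_line p (A j) /\ on_line p (A k).

(* Main.v *)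
Require Import Defs.
From Stdlib Require Import Reals Lra Lia Field Classical ClassicalEpsilon FunctionalExtensionality List Arith.
Require Import Defs.
Open Scope R_scope.

Definition C1 : C := (1, 0).
Definition Copp (x : C) : C := (- fst x, - snd x).
Definition Cinv (x : C) : C :=
  (fst x / (fst x * fst x + snd x * snd x), - snd x / (fst x * fst x + snd x * snd x)).
Definition Cdiv (x y : C) : C := Cmul x (Cinv y).

Lemma C_ext (x y : C) : fst x = fst y -> snd x = snd y -> x = y.
Proof. destruct x, y; simpl; intros; subst; reflexivity. Qed.

Lemma Cring : ring_theory C0 C1 Cadd Cmul Csub Copp (@eq C).
Proof.
  constructor; intros; apply C_ext; unfold Cadd, Cmul, Csub, Copp, C0, C1; simpl; ring.
Qed.

Lemma C1_neq_C0 : C1 <> C0.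
Proof. unfold C1, C0; intro H; injection H; lra. Qed.

Lemma Cnorm_pos (x : C) : x <> C0 -> fst x * fst x + snd x * snd x <> 0.
Proof.
  destruct x as [a b]; simpl; intros H E. apply H.
  assert (a = 0) by nra. assert (b = 0) by nra. subst; reflexivity.
Qed.

Lemma Cfield : field_theory C0 C1 Cadd Cmul Csub Copp Cdiv Cinv (@eq C).
Proof.
  constructor.
  - exact Cring.
  - exact C1_neq_C0.
  - reflexivity.
  - intros p Hp. apply C_ext; destruct p as [a b]; pose proof (Cnorm_pos (a,b) Hp) as N;
    unfold Cmul, Cinv, C1; simpl in *; field; exact N.
Qed.

Add Field Cfield_inst : Cfield.

Lemma Cmul_integral (x y : C) : Cmul x y = C0 -> x = C0 \/ y = C0.
Proof.
  intro H. destruct (classic (x = C0)) as [Hx|Hx]; [left; exact Hx| right].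
  assert (y = Cmul (Cinv x) (Cmul x y)) by (field; exact Hx).
  rewrite H0, H. ring.
Qed.

Lemma Cmul_neq0 (x y : C) : x <> C0 -> y <> C0 -> Cmul x y <> C0.
Proof. intros Hx Hy H. destruct (Cmul_integral _ _ H); auto. Qed.

Goal forall x y : C, Cmul x (Csub y y) = C0. intros. ring. Qed.

Definition vzero : vec3 := mkV C0 C0 C0.
Definition cross (u v : vec3) : vec3 :=
  mkV (Csub (Cmul (v1 u) (v2 v)) (Cmul (v2 u) (v1 v)))
      (Csub (Cmul (v2 u) (v0 v)) (Cmul (v0 u) (v2 v)))
      (Csub (Cmul (v0 u) (v1 v)) (Cmul (v1 u) (v0 v))).
Definition vadd (u v : vec3) : vec3 := mkV (Cadd (v0 u) (v0 v)) (Cadd (v1 u) (v1 v)) (Cadd (v2 u) (v2 v)).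
Definition vsub (u v : vec3) : vec3 := mkV (Csub (v0 u) (v0 v)) (Csub (v1 u) (v1 v)) (Csub (v2 u) (v2 v)).

Lemma V_ext (u v : vec3) : v0 u = v0 v -> v1 u = v1 v -> v2 u = v2 v -> u = v.
Proof. destruct u, v; simpl; intros; subst; reflexivity. Qed.

Ltac vring := first [ apply V_ext; simpl; ring | unfold det3, dot, cross, vscale, vadd, vsub; simpl; ring ].

Lemma det3_dot (u v w : vec3) : det3 u v w = dot u (cross v w).
Proof. destruct u, v, w; unfold det3, dot, cross; simpl; ring. Qed.

Lemma det3_rot (u v w : vec3) : det3 u v w = det3 v w u.
Proof. destruct u, v, w; unfold det3; simpl; ring. Qed.
Lemma det3_swap (u v w : vec3) : det3 u v w = Copp (det3 v u w).
Proof. destruct u, v, w; unfold det3; simpl; ring. Qed.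

Lemma Copp_eq0 (x : C) : Copp x = C0 -> x = C0.
Proof. intro H. assert (x = Copp (Copp x)) by ring. rewrite H0, H. ring. Qed.

Lemma det3_swap0 (u v w : vec3) : det3 v u w = C0 -> det3 u v w = C0.
Proof. intro H. rewrite det3_swap, H. ring. Qed.
Lemma det3_rot0 (u v w : vec3) : det3 v w u = C0 -> det3 u v w = C0.
Proof. intro H. rewrite det3_rot; exact H. Qed.

Lemma det3_uuw (u w : vec3) : det3 u u w = C0.
Proof. destruct u, w; unfold det3; simpl; ring. Qed.
Lemma det3_uvu (u v : vec3) : det3 u v u = C0.
Proof. destruct u, v; unfold det3; simpl; ring. Qed.
Lemma det3_uvv (u v : vec3) : det3 u v v = C0.
Proof. destruct u, v; unfold det3; simpl; ring. Qed.

Lemma dot_cross_l (P w : vec3) : dot (cross P w) P = C0.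
Proof. destruct P, w; unfold dot, cross; simpl; ring. Qed.
Lemma dot_cross_r (P w : vec3) : dot (cross w P) P = C0.
Proof. destruct P, w; unfold dot, cross; simpl; ring. Qed.

Lemma det3_dotcross (u v w : vec3) : det3 u v w = dot w (cross u v).
Proof. destruct u, v, w; unfold det3, dot, cross; simpl; ring. Qed.

Lemma dot_comm (u v : vec3) : dot u v = dot v u.
Proof. destruct u, v; unfold dot; simpl; ring. Qed.

Lemma vnz_cases (u : vec3) : vnz u -> v0 u <> C0 \/ v1 u <> C0 \/ v2 u <> C0.
Proof.
  unfold vnz; intro H.
  destruct (classic (v0 u = C0)); destruct (classic (v1 u = C0)); destruct (classic (v2 u = C0)); tauto.
Qed.

Lemma vnz_scale (c : C) (u : vec3) : c <> C0 -> vnz u -> vnz (vscale c u).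
Proof.
  intros Hc Hu [E0 [E1 E2]]; apply Hu; simpl in *.
  repeat split; [destruct (Cmul_integral _ _ E0) | destruct (Cmul_integral _ _ E1) | destruct (Cmul_integral _ _ E2)]; tauto.
Qed.

Lemma vnz_of_scale (c : C) (u : vec3) : vnz (vscale c u) -> vnz u.
Proof.
  intros H [E0 [E1 E2]]; apply H; simpl; rewrite E0, E1, E2; repeat split; ring.
Qed.

Lemma det_orth (P x y z : vec3) : vnz P -> dot x P = C0 -> dot y P = C0 -> dot z P = C0 ->
  det3 x y z = C0.
Proof.
  intros HP Hx Hy Hz.
  assert (K : forall f : vec3 -> C,
    Cmul (det3 x y z) (f P) =
    Cadd (Cadd (Cmul (dot P x) (f (cross y z))) (Cmul (dot P y) (f (cross z x)))) (Cmul (dot P z) (f (cross x y)))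
    -> True) by auto.
  assert (E0 : Cmul (det3 x y z) (v0 P) =
    Cadd (Cadd (Cmul (dot x P) (v0 (cross y z))) (Cmul (dot y P) (v0 (cross z x)))) (Cmul (dot z P) (v0 (cross x y))))
    by (destruct x, y, z, P; unfold det3, dot, cross; simpl; ring).
  assert (E1 : Cmul (det3 x y z) (v1 P) =
    Cadd (Cadd (Cmul (dot x P) (v1 (cross y z))) (Cmul (dot y P) (v1 (cross z x)))) (Cmul (dot z P) (v1 (cross x y))))
    by (destruct x, y, z, P; unfold det3, dot, cross; simpl; ring).
  assert (E2 : Cmul (det3 x y z) (v2 P) =
    Cadd (Cadd (Cmul (dot x P) (v2 (cross y z))) (Cmul (dot y P) (v2 (cross z x)))) (Cmul (dot z P) (v2 (cross x y))))
    by (destruct x, y, z, P; unfold det3, dot, cross; simpl; ring).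
  rewrite Hx, Hy, Hz in E0, E1, E2.
  destruct (vnz_cases _ HP) as [H|[H|H]].
  - assert (Cmul (det3 x y z) (v0 P) = C0) by (rewrite E0; ring).
    destruct (Cmul_integral _ _ H0); tauto.
  - assert (Cmul (det3 x y z) (v1 P) = C0) by (rewrite E1; ring).
    destruct (Cmul_integral _ _ H0); tauto.
  - assert (Cmul (det3 x y z) (v2 P) = C0) by (rewrite E2; ring).
    destruct (Cmul_integral _ _ H0); tauto.
Qed.

Lemma same_of_cross (u v : vec3) : vnz u -> vnz v -> cross u v = vzero -> same_point u v.
Proof.
  intros Hu Hv Hc.
  assert (X0 : Cmul (v1 u) (v2 v) = Cmul (v2 u) (v1 v)).
  { assert (H := f_equal v0 Hc); simpl in H. assert (Cmul (v1 u) (v2 v) = Cadd (Csub (Cmul (v1 u) (v2 v)) (Cmul (v2 u) (v1 v))) (Cmul (v2 u) (v1 v))) by ring.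
    rewrite H0, H. ring. }
  assert (X1 : Cmul (v2 u) (v0 v) = Cmul (v0 u) (v2 v)).
  { assert (H := f_equal v1 Hc); simpl in H. assert (Cmul (v2 u) (v0 v) = Cadd (Csub (Cmul (v2 u) (v0 v)) (Cmul (v0 u) (v2 v))) (Cmul (v0 u) (v2 v))) by ring.
    rewrite H0, H. ring. }
  assert (X2 : Cmul (v0 u) (v1 v) = Cmul (v1 u) (v0 v)).
  { assert (H := f_equal v2 Hc); simpl in H. assert (Cmul (v0 u) (v1 v) = Cadd (Csub (Cmul (v0 u) (v1 v)) (Cmul (v1 u) (v0 v))) (Cmul (v1 u) (v0 v))) by ring.
    rewrite H0, H. ring. }
  clear Hc.
  destruct u as [a0 a1 a2], v as [b0 b1 b2]; simpl in *.
  assert (GEN : forall c, (b0 = Cmul c a0 /\ b1 = Cmul c a1 /\ b2 = Cmul c a2) -> same_point (mkV a0 a1 a2) (mkV b0 b1 b2)).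
  { intros c [E0 [E1 E2]]. exists c; split.
    - intro Hc0. apply Hv. simpl. rewrite E0, E1, E2, Hc0. repeat split; ring.
    - unfold vscale; simpl; rewrite E0, E1, E2; reflexivity. }
  destruct (vnz_cases _ Hu) as [H|[H|H]]; simpl in H.
  - apply (GEN (Cdiv b0 a0)); repeat split.
    + field; auto.
    + assert (b1 = Cdiv (Cmul a1 b0) a0) by (rewrite <- X2; field; auto). rewrite H0; field; auto.
    + assert (b2 = Cdiv (Cmul a2 b0) a0) by (rewrite X1; field; auto). rewrite H0; field; auto.
  - apply (GEN (Cdiv b1 a1)); repeat split.
    + assert (b0 = Cdiv (Cmul a0 b1) a1) by (rewrite X2; field; auto). rewrite H0; field; auto.
    + field; auto.
    + assert (b2 = Cdiv (Cmul a2 b1) a1) by (rewrite <- X0; field; auto). rewrite H0; field; auto.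
  - apply (GEN (Cdiv b2 a2)); repeat split.
    + assert (b0 = Cdiv (Cmul a0 b2) a2) by (rewrite <- X1; field; auto). rewrite H0; field; auto.
    + assert (b1 = Cdiv (Cmul a1 b2) a2) by (rewrite X0; field; auto). rewrite H0; field; auto.
    + field; auto.
Qed.

Lemma cross_of_same (u v : vec3) : same_point u v -> cross u v = vzero.
Proof. intros [c [_ E]]; subst v; destruct u; apply V_ext; unfold cross, vscale, vzero; simpl; ring. Qed.

Lemma cross_nz (u v : vec3) : vnz u -> vnz v -> ~ same_point u v -> vnz (cross u v).
Proof.
  intros Hu Hv Hs Hz. apply Hs, same_of_cross; auto.
  destruct Hz as [E0 [E1 E2]]. apply V_ext; simpl; assumption.
Qed.

Lemma same_sym (u v : vec3) : same_point u v -> same_point v u.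
Proof.
  intros [c [Hc E]]; subst v. exists (Cinv c); split.
  - intro H. apply C1_neq_C0. assert (E : C1 = Cmul (Cinv c) c) by (field; auto). rewrite E, H. ring.
  - destruct u; apply V_ext; unfold vscale; simpl; field; auto.
Qed.

Lemma same_trans (u v w : vec3) : same_point u v -> same_point v w -> same_point u w.
Proof.
  intros [c [Hc E]] [d [Hd F]]; subst. exists (Cmul d c); split.
  - apply Cmul_neq0; auto.
  - destruct u; apply V_ext; unfold vscale; simpl; ring.
Qed.

Lemma on_line_same (p q h : vec3) : same_point p q -> on_line q h -> on_line p h.
Proof.
  intros [c [Hc E]] Hq; subst q. unfold on_line in *.
  assert (dot (vscale c p) h = Cmul c (dot p h)) by (destruct p, h; unfold dot, vscale; simpl; ring).
  rewrite H in Hq. destruct (Cmul_integral _ _ Hq); tauto.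
Qed.

Lemma cross_cross_orth (p u v : vec3) : dot p u = C0 -> dot p v = C0 -> cross p (cross u v) = vzero.
Proof.
  intros Hu Hv.
  assert (E : cross p (cross u v) = vsub (vscale (dot p v) u) (vscale (dot p u) v))
    by (destruct p, u, v; apply V_ext; unfold cross, vsub, vscale, dot; simpl; ring).
  rewrite E, Hu, Hv. destruct u, v; apply V_ext; unfold vsub, vscale, vzero; simpl; ring.
Qed.

Lemma unique_inter (u v p q : vec3) : vnz u -> vnz v -> ~ same_point u v ->
  vnz p -> vnz q -> on_line p u -> on_line p v -> on_line q u -> on_line q v -> same_point p q.
Proof.
  intros Hu Hv Huv Hp Hq Hpu Hpv Hqu Hqv.
  pose proof (cross_nz _ _ Hu Hv Huv) as X.
  apply same_trans with (cross u v).
  - apply same_of_cross; auto. apply cross_cross_orth; auto.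
  - apply same_of_cross; auto.
    assert (cross q (cross u v) = vzero) by (apply cross_cross_orth; auto).
    assert (E : cross (cross u v) q = vsub vzero (cross q (cross u v)))
      by (destruct q, u, v; apply V_ext; unfold cross, vsub, vzero; simpl; ring).
    rewrite E, H. apply V_ext; unfold vsub, vzero; simpl; ring.
Qed.

Lemma solve_cross (P h : vec3) : vnz P -> dot h P = C0 -> exists w, cross P w = h.
Proof.
  intros HP Hd. destruct P as [p0 p1 p2], h as [h0 h1 h2]; unfold dot in Hd; simpl in *.
  destruct (vnz_cases _ HP) as [H|[H|H]]; simpl in H.
  - assert (E : h0 = Cdiv (Copp (Cadd (Cmul h1 p1) (Cmul h2 p2))) p0).
    { assert (h0 = Cdiv (Cmul h0 p0) p0) by (field; auto). rewrite H0.
      assert (Cmul h0 p0 = Csub (Cadd (Cadd (Cmul h0 p0) (Cmul h1 p1)) (Cmul h2 p2)) (Cadd (Cmul h1 p1) (Cmul h2 p2))) by ring.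
      rewrite H1, Hd. field; auto. }
    exists (mkV C0 (Cdiv h2 p0) (Copp (Cdiv h1 p0))). apply V_ext; unfold cross; simpl; [rewrite E|..]; field; auto.
  - assert (E : h1 = Cdiv (Copp (Cadd (Cmul h0 p0) (Cmul h2 p2))) p1).
    { assert (h1 = Cdiv (Cmul h1 p1) p1) by (field; auto). rewrite H0.
      assert (Cmul h1 p1 = Csub (Cadd (Cadd (Cmul h0 p0) (Cmul h1 p1)) (Cmul h2 p2)) (Cadd (Cmul h0 p0) (Cmul h2 p2))) by ring.
      rewrite H1, Hd. field; auto. }
    exists (mkV (Copp (Cdiv h2 p1)) C0 (Cdiv h0 p1)). apply V_ext; unfold cross; simpl; [|rewrite E|]; field; auto.
  - assert (E : h2 = Cdiv (Copp (Cadd (Cmul h0 p0) (Cmul h1 p1))) p2).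
    { assert (h2 = Cdiv (Cmul h2 p2) p2) by (field; auto). rewrite H0.
      assert (Cmul h2 p2 = Csub (Cadd (Cadd (Cmul h0 p0) (Cmul h1 p1)) (Cmul h2 p2)) (Cadd (Cmul h0 p0) (Cmul h1 p1))) by ring.
      rewrite H1, Hd. field; auto. }
    exists (mkV (Cdiv h1 p2) (Copp (Cdiv h0 p2)) C0). apply V_ext; unfold cross; simpl; [| |rewrite E]; field; auto.
Qed.

Fixpoint is_poly (d : nat) (f : C -> C) : Prop :=
  match d with
  | O => forall t, f t = f C0
  | S d' => exists c g, is_poly d' g /\ forall t, f t = Cadd c (Cmul t (g t))
  end.

Lemma is_poly_const (c : C) : is_poly 0 (fun _ => c).
Proof. simpl; reflexivity. Qed.

Lemma is_poly_S (d : nat) (f : C -> C) : is_poly d f -> is_poly (S d) f.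
Proof.
  revert f; induction d; intros f H.
  - exists (f C0), (fun _ => C0); split; [apply is_poly_const|]. intro t; rewrite (H t); ring.
  - destruct H as [c [g [Hg E]]]. exists c, g; split; auto.
Qed.

Lemma is_poly_le (d e : nat) (f : C -> C) : (d <= e)%nat -> is_poly d f -> is_poly e f.
Proof. intros H; induction H; auto using is_poly_S. Qed.

Lemma is_poly_ext (d : nat) (f g : C -> C) : (forall t, f t = g t) -> is_poly d f -> is_poly d g.
Proof.
  intros E H. replace g with f; auto. apply functional_extensionality; auto.
Qed.

Lemma is_poly_add (d : nat) (f g : C -> C) : is_poly d f -> is_poly d g ->
  is_poly d (fun t => Cadd (f t) (g t)).
Proof.
  revert f g; induction d; intros f g Hf Hg.
  - simpl in *; intro t; rewrite Hf, Hg; reflexivity.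
  - destruct Hf as [c [f' [Hf' Ef]]], Hg as [e [g' [Hg' Eg]]].
    exists (Cadd c e), (fun t => Cadd (f' t) (g' t)); split; auto.
    intro t; rewrite Ef, Eg; ring.
Qed.

Lemma is_poly_scale (d : nat) (a : C) (f : C -> C) : is_poly d f -> is_poly d (fun t => Cmul a (f t)).
Proof.
  revert f; induction d; intros f Hf.
  - simpl in *; intro t; rewrite Hf; reflexivity.
  - destruct Hf as [c [f' [Hf' Ef]]]. exists (Cmul a c), (fun t => Cmul a (f' t)); split; auto.
    intro t; rewrite Ef; ring.
Qed.

Lemma is_poly_shift (d : nat) (g : C -> C) : is_poly d g -> is_poly (S d) (fun t => Cmul t (g t)).
Proof. intros H; exists C0, g; split; auto; intro; ring. Qed.

Lemma is_poly_mul (d1 d2 : nat) (f g : C -> C) : is_poly d1 f -> is_poly d2 g ->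
  is_poly (d1 + d2) (fun t => Cmul (f t) (g t)).
Proof.
  revert f; induction d1; intros f Hf Hg.
  - simpl. apply is_poly_ext with (fun t => Cmul (f C0) (g t)).
    + intro t; simpl in Hf; rewrite (Hf t); reflexivity.
    + apply is_poly_scale; auto.
  - destruct Hf as [c [f' [Hf' Ef]]].
    apply is_poly_ext with (fun t => Cadd (Cmul c (g t)) (Cmul t (Cmul (f' t) (g t)))).
    + intro t; rewrite Ef; ring.
    + apply is_poly_add.
      * apply is_poly_le with d2; [lia|]. apply is_poly_scale; auto.
      * simpl; apply is_poly_shift; auto.
Qed.

Lemma is_poly_id : is_poly 1 (fun t => t).
Proof. exists C0, (fun _ => C1); split; [apply is_poly_const| intro; unfold C1; apply C_ext; simpl; ring]. Qed.

Definition is_P (f : C -> C) : Prop := exists d, is_poly d f.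

Lemma is_P_const c : is_P (fun _ => c).
Proof. exists 0%nat; apply is_poly_const. Qed.
Lemma is_P_id : is_P (fun t => t).
Proof. exists 1%nat; apply is_poly_id. Qed.
Lemma is_P_add f g : is_P f -> is_P g -> is_P (fun t => Cadd (f t) (g t)).
Proof.
  intros [d Hd] [e He]; exists (Nat.max d e); apply is_poly_add;
  [apply is_poly_le with d | apply is_poly_le with e]; auto; lia.
Qed.
Lemma is_P_mul f g : is_P f -> is_P g -> is_P (fun t => Cmul (f t) (g t)).
Proof. intros [d Hd] [e He]; exists (d + e)%nat; apply is_poly_mul; auto. Qed.
Lemma is_P_sub f g : is_P f -> is_P g -> is_P (fun t => Csub (f t) (g t)).
Proof.
  intros Hf Hg. destruct (is_P_add f (fun t => Cmul (Copp C1) (g t)) Hf (is_P_mul _ _ (is_P_const _) Hg)) as [d Hd].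
  exists d; eapply is_poly_ext; [|exact Hd]. intro; simpl; ring.
Qed.

Lemma is_poly_factor (d : nat) (f : C -> C) : is_poly (S d) f -> forall a,
  exists h, is_poly d h /\ forall t, f t = Cadd (f a) (Cmul (Csub t a) (h t)).
Proof.
  revert f; induction d; intros f Hf a; destruct Hf as [c [g [Hg Ef]]].
  - exists (fun _ => g C0); split; [apply is_poly_const|].
    intro t; rewrite !Ef; simpl in Hg; rewrite (Hg t), (Hg a); ring.
  - destruct (IHd g Hg a) as [hg [Hhg Eg]].
    exists (fun t => Cadd (g t) (Cmul a (hg t))); split.
    + apply is_poly_add; auto. apply is_poly_S, is_poly_scale; auto.
    + intro t; rewrite !Ef. rewrite (Eg t). ring.
Qed.

Lemma poly_roots (d : nat) : forall (f : C -> C) (P : nat -> C -> Prop),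
  is_poly d f -> f C0 <> C0 ->
  (forall i j t, P i t -> P j t -> i = j) ->
  ~ (forall k, (k <= d)%nat -> exists t, P k t /\ f t = C0).
Proof.
  induction d; intros f P Hf H0 Hdisj Hall.
  - destruct (Hall 0%nat (le_n _)) as [t [_ Ht]]. simpl in Hf. rewrite Hf in Ht. auto.
  - destruct (Hall (S d) (le_n _)) as [a [Pa Fa]].
    destruct (is_poly_factor d f Hf a) as [h [Hh Eh]].
    apply (IHd h P Hh).
    + intro E. apply H0. rewrite Eh, Fa, E. ring.
    + exact Hdisj.
    + intros k Hk. destruct (Hall k ltac:(lia)) as [t [Pt Ft]]. exists t; split; auto.
      rewrite Eh, Fa in Ft.
      assert (Cmul (Csub t a) (h t) = C0) by (rewrite <- Ft; ring).
      destruct (Cmul_integral _ _ H) as [E|E]; auto.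
      exfalso. assert (t = a) by (assert (t = Cadd (Csub t a) a) by ring; rewrite H1, E; ring).
      subst t. specialize (Hdisj _ _ _ Pt Pa). lia.
Qed.

Definition thin (B : C -> Prop) : Prop :=
  exists f, is_P f /\ f C0 <> C0 /\ forall t, B t -> f t = C0.

Lemma thin_mono (B B' : C -> Prop) : thin B -> (forall t, B' t -> B t) -> thin B'.
Proof. intros [f [Hf [H0 H]]] Hs; exists f; auto. Qed.

Lemma thin_empty : thin (fun _ => False).
Proof. exists (fun _ => C1); split; [apply is_P_const|split; [exact C1_neq_C0| tauto]]. Qed.

Lemma thin_union (B1 B2 : C -> Prop) : thin B1 -> thin B2 -> thin (fun t => B1 t \/ B2 t).
Proof.
  intros [f [Hf [Hf0 Hf1]]] [g [Hg [Hg0 Hg1]]].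
  exists (fun t => Cmul (f t) (g t)); split; [apply is_P_mul; auto|split].
  - apply Cmul_neq0; auto.
  - intros t [H|H]; [rewrite Hf1 by auto | rewrite Hg1 by auto]; ring.
Qed.

Lemma thin_fin (m : nat) (B : nat -> C -> Prop) : (forall i, (i < m)%nat -> thin (B i)) ->
  thin (fun t => exists i, (i < m)%nat /\ B i t).
Proof.
  induction m; intro H.
  - eapply thin_mono; [apply thin_empty|]. intros t [i [Hi _]]; lia.
  - eapply thin_mono; [apply (thin_union _ _ (IHm (fun i Hi => H i ltac:(lia))) (H m ltac:(lia)))|].
    intros t [i [Hi Bi]]. destruct (Nat.eq_dec i m); [subst; right; auto| left; exists i; split; auto; lia].
Qed.

Lemma thin_zero (f : C -> C) : is_P f -> f C0 <> C0 -> thin (fun t => f t = C0).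
Proof. intros; exists f; auto. Qed.

Definition is_Pv (F : C -> vec3) : Prop :=
  is_P (fun t => v0 (F t)) /\ is_P (fun t => v1 (F t)) /\ is_P (fun t => v2 (F t)).

Lemma thin_vnz (F : C -> vec3) : is_Pv F -> vnz (F C0) -> thin (fun t => ~ vnz (F t)).
Proof.
  intros [H0 [H1 H2]] Hn.
  destruct (vnz_cases _ Hn) as [E|[E|E]].
  - eapply thin_mono; [apply (thin_zero _ H0 E)|]. intros t Ht; apply NNPP in Ht; tauto.
  - eapply thin_mono; [apply (thin_zero _ H1 E)|]. intros t Ht; apply NNPP in Ht; tauto.
  - eapply thin_mono; [apply (thin_zero _ H2 E)|]. intros t Ht; apply NNPP in Ht; tauto.
Qed.

Lemma is_Pv_cross F G : is_Pv F -> is_Pv G -> is_Pv (fun t => cross (F t) (G t)).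
Proof.
  intros [F0 [F1 F2]] [G0 [G1 G2]]; unfold cross; simpl;
  repeat split; apply is_P_sub; apply is_P_mul; auto.
Qed.

Lemma is_P_dot F G : is_Pv F -> is_Pv G -> is_P (fun t => dot (F t) (G t)).
Proof.
  intros [F0 [F1 F2]] [G0 [G1 G2]]; unfold dot;
  repeat apply is_P_add; apply is_P_mul; auto.
Qed.

Lemma is_P_det F G H : is_Pv F -> is_Pv G -> is_Pv H -> is_P (fun t => det3 (F t) (G t) (H t)).
Proof.
  intros HF HG HH. destruct (is_P_dot F (fun t => cross (G t) (H t)) HF (is_Pv_cross G H HG HH)) as [d Hd]; exists d; eapply is_poly_ext; [|exact Hd]. intro; rewrite det3_dot; reflexivity.
Qed.

Definition gam (s u : R) : C := (u, s * u * (1 - u)).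

Lemma avoid (B : C -> Prop) : thin B -> exists s, forall u, 0 < u < 1 -> ~ B (gam s u).
Proof.
  intros [f [[d Hf] [H0 HB]]].
  apply NNPP; intro Hn.
  apply (poly_roots d f (fun k t => exists u, 0 < u < 1 /\ t = gam (INR k) u) Hf H0).
  - intros i j t [u [Hu E]] [u' [Hu' E']]. subst t. unfold gam in E'. injection E'; intros E2 E1.
    subst u'. apply INR_eq. assert (0 < u * (1 - u)) by nra. nra.
  - intros k _. apply NNPP; intro Hk. apply Hn. exists (INR k). intros u Hu HBu.
    apply Hk. exists (gam (INR k) u); split; eauto.
Qed.

Inductive spec := SP0 | SP1 (a b : nat) | SP2 (a b a' b' : nat).

Definition line_of (s : spec) (B : Config) (w : vec3) : vec3 :=
  match s with
  | SP0 => w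
  | SP1 a b => cross (cross (B a) (B b)) w
  | SP2 a b a' b' => cross (cross (B a) (B b)) (cross (B a') (B b'))
  end.

Fixpoint build (ord : list (nat * spec)) (th : nat -> vec3) : Config :=
  match ord with
  | nil => fun _ => vzero
  | (c, s) :: r => fun i => if Nat.eqb i c then line_of s (build r th) (th c) else build r th i
  end.

Definition pair_in (s : spec) (a b : nat) : Prop :=
  match s with
  | SP0 => False
  | SP1 x y => a = x /\ b = y
  | SP2 x y x' y' => (a = x /\ b = y) \/ (a = x' /\ b = y')
  end.

Definition spec_ok (A : Config) (c : nat) (s : spec) (R : list nat) : Prop :=
  match s with
  | SP0 => True
  | SP1 a b => In a R /\ In b R /\ a <> b /\ I_of A a b c
  | SP2 a b a' b' => In a R /\ In b R /\ a <> b /\ I_of A a b c /\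
                     In a' R /\ In b' R /\ a' <> b' /\ I_of A a' b' c /\
                     ~ (I_of A a b a' /\ I_of A a b b')
  end.

Definition cover (A : Config) (c : nat) (s : spec) (R : list nat) : Prop :=
  forall a' b', In a' R -> In b' R -> a' <> b' -> I_of A a' b' c ->
    exists a b, pair_in s a b /\ I_of A a b a' /\ I_of A a b b'.

Fixpoint valid (A : Config) (ord : list (nat * spec)) : Prop :=
  match ord with
  | nil => True
  | (c, s) :: r => valid A r /\ ~ In c (map fst r) /\ spec_ok A c s (map fst r) /\ cover A c s (map fst r)
  end.

Lemma pair_spec (A : Config) c s R a b : spec_ok A c s R -> pair_in s a b ->
  In a R /\ In b R /\ a <> b /\ I_of A a b c.
Proof.
  destruct s; simpl; [tauto| intros H [E1 E2]; subst; tauto |].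
  intros H [[E1 E2]|[E1 E2]]; subst; tauto.
Qed.

Lemma build_ne ord c s th i : i <> c -> build ((c, s) :: ord) th i = build ord th i.
Proof. intro H; simpl; destruct (Nat.eqb_spec i c); [contradiction|reflexivity]. Qed.

Lemma build_eq ord c s th : build ((c, s) :: ord) th c = line_of s (build ord th) (th c).
Proof. simpl; rewrite Nat.eqb_refl; reflexivity. Qed.

Lemma build_agree ord th1 th2 : (forall i, In i (map fst ord) -> th1 i = th2 i) ->
  forall i, build ord th1 i = build ord th2 i.
Proof.
  induction ord as [|[c s] r IH]; intros H i; simpl; auto.
  assert (E : build r th1 = build r th2).
  { apply functional_extensionality; intro j; apply IH; intros; apply H; simpl; auto. }
  rewrite E, (H c) by (simpl; auto). reflexivity.
Qed.

Lemma I_swap (A : Config) i j k : I_of A i j k -> I_of A j i k.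
Proof. intros [p H]; exists p; tauto. Qed.
Lemma I_rot (A : Config) i j k : I_of A i j k -> I_of A j k i.
Proof. intros [p H]; exists p; tauto. Qed.

Lemma dot_self_cross (u v : vec3) : dot u (cross u v) = C0.
Proof. destruct u, v; unfold dot, cross; simpl; ring. Qed.
Lemma dot_self_cross2 (u v : vec3) : dot v (cross u v) = C0.
Proof. destruct u, v; unfold dot, cross; simpl; ring. Qed.

Lemma build_det (A : Config) (ord : list (nat * spec)) (th : nat -> vec3) :
  valid A ord ->
  (forall i j, In i (map fst ord) -> In j (map fst ord) -> i <> j ->
     vnz (cross (build ord th i) (build ord th j))) ->
  forall i j k, In i (map fst ord) -> In j (map fst ord) -> In k (map fst ord) ->
    I_of A i j k -> det3 (build ord th i) (build ord th j) (build ord th k) = C0.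
Proof.
  induction ord as [|[c s] r IH]; [simpl; tauto|].
  intros [Vr [Nc [Sok Cov]]] ND.
  set (Br := build r th).
  assert (NDr : forall i j, In i (map fst r) -> In j (map fst r) -> i <> j -> vnz (cross (Br i) (Br j))).
  { intros i j Hi Hj Hij. specialize (ND i j (or_intror Hi) (or_intror Hj) Hij).
    rewrite !build_ne in ND by (intro; subst; contradiction). exact ND. }
  specialize (IH Vr NDr).
  assert (Core : forall a' b', In a' (map fst r) -> In b' (map fst r) -> I_of A a' b' c ->
            det3 (Br a') (Br b') (build ((c, s) :: r) th c) = C0).
  { intros a' b' Ha' Hb' HI. destruct (Nat.eq_dec a' b') as [E|Ne]; [subst; apply det3_uuw|].
    destruct (Cov a' b' Ha' Hb' Ne HI) as [a [b [Hp [Ia Ib]]]].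
    destruct (pair_spec A c s _ a b Sok Hp) as [Ha [Hb [Hab _]]].
    set (P := cross (Br a) (Br b)).
    apply (det_orth P).
    - apply NDr; auto.
    - unfold P; rewrite <- det3_dotcross. apply IH; auto.
    - unfold P; rewrite <- det3_dotcross. apply IH; auto.
    - rewrite build_eq. fold Br. destruct s; simpl in Hp.
      + contradiction.
      + destruct Hp; subst; apply dot_cross_l.
      + destruct Hp as [[E1 E2]|[E1 E2]]; subst; [apply dot_cross_l| apply dot_cross_r]. }
  intros i j k Hi Hj Hk HI; simpl in Hi, Hj, Hk.
  destruct (Nat.eq_dec i c) as [Ei|Ei]; destruct (Nat.eq_dec j c) as [Ej|Ej];
  destruct (Nat.eq_dec k c) as [Ek|Ek]; subst;
  try apply det3_uuw; try apply det3_uvu; try apply det3_uvv.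
  - assert (Hj' : In j (map fst r)) by (destruct Hj; [congruence|auto]).
    assert (Hk' : In k (map fst r)) by (destruct Hk; [congruence|auto]).
    rewrite det3_rot, !(build_ne r c s th) by auto. apply Core; auto. apply I_rot; auto.
  - assert (Hi' : In i (map fst r)) by (destruct Hi; [congruence|auto]).
    assert (Hk' : In k (map fst r)) by (destruct Hk; [congruence|auto]).
    rewrite det3_rot, det3_rot, !(build_ne r c s th) by auto. apply Core; auto.
    apply I_rot, I_rot; auto.
  - assert (Hi' : In i (map fst r)) by (destruct Hi; [congruence|auto]).
    assert (Hj' : In j (map fst r)) by (destruct Hj; [congruence|auto]).
    rewrite !(build_ne r c s th) by auto. apply Core; auto.
  - assert (Hi' : In i (map fst r)) by (destruct Hi; [congruence|auto]).
    assert (Hj' : In j (map fst r)) by (destruct Hj; [congruence|auto]).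
    assert (Hk' : In k (map fst r)) by (destruct Hk; [congruence|auto]).
    rewrite !(build_ne r c s th) by auto. apply IH; auto.
Qed.

Lemma cross_scale (a b : C) (u v : vec3) :
  cross (vscale a u) (vscale b v) = vscale (Cmul a b) (cross u v).
Proof. destruct u, v; apply V_ext; unfold cross, vscale; simpl; ring. Qed.
Lemma dot_scale_r (k : C) (u v : vec3) : dot u (vscale k v) = Cmul k (dot u v).
Proof. destruct u, v; unfold dot, vscale; simpl; ring. Qed.
Lemma det_scale (a b c : C) (u v w : vec3) :
  det3 (vscale a u) (vscale b v) (vscale c w) = Cmul (Cmul (Cmul a b) c) (det3 u v w).
Proof. destruct u, v, w; unfold det3, vscale; simpl; ring. Qed.

Lemma I_rep (n : nat) (A : Config) a b : is_arrangement n A -> (a < n)%nat -> (b < n)%nat -> a <> b ->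
  I_of A a b a /\ I_of A a b b.
Proof.
  intros [Hnz Hd] Ha Hb Hab.
  pose proof (cross_nz _ _ (Hnz a Ha) (Hnz b Hb) (Hd a b Ha Hb Hab)) as X.
  assert (O1 : on_line (cross (A a) (A b)) (A a)) by (unfold on_line; rewrite dot_comm; apply dot_self_cross).
  assert (O2 : on_line (cross (A a) (A b)) (A b)) by (unfold on_line; rewrite dot_comm; apply dot_self_cross2).
  split; exists (cross (A a) (A b)); tauto.
Qed.

Lemma vnz_not_zero (u : vec3) : ~ vnz u -> u = vzero.
Proof. intro H. apply NNPP in H. destruct H as [E0 [E1 E2]]; apply V_ext; auto. Qed.

Lemma build_surj (n : nat) (A : Config) (x : Config) (ord : list (nat * spec)) :
  is_arrangement n A -> realization_space n (I_of A) x ->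
  valid A ord -> (forall i, In i (map fst ord) -> (i < n)%nat) ->
  exists th lam, forall i, In i (map fst ord) -> lam i <> C0 /\ build ord th i = vscale (lam i) (x i).
Proof.
  intros HA [Sx1 [Sx2 Sx3]].
  induction ord as [|[c s] r IH]; intros V Hn.
  - exists (fun _ => vzero), (fun _ => C1); simpl; tauto.
  - destruct V as [Vr [Nc [Sok Cov]]].
    destruct (IH Vr (fun i Hi => Hn i (or_intror Hi))) as [th0 [lam0 Hr]].
    set (Br := build r th0).
    assert (Hcn : (c < n)%nat) by (apply Hn; simpl; auto).
    assert (Hrn : forall i, In i (map fst r) -> (i < n)%nat) by (intros; apply Hn; simpl; auto).
    assert (Key : exists w lc, lc <> C0 /\ line_of s Br w = vscale lc (x c)).
    { assert (Pnz : forall a b, In a (map fst r) -> In b (map fst r) -> a <> b ->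
                vnz (cross (Br a) (Br b)) /\ cross (Br a) (Br b) = vscale (Cmul (lam0 a) (lam0 b)) (cross (x a) (x b))).
      { intros a b Ha Hb Hab. destruct (Hr a Ha) as [La Ea]; destruct (Hr b Hb) as [Lb Eb].
        unfold Br; rewrite Ea, Eb, cross_scale. split; auto.
        apply vnz_scale; [apply Cmul_neq0; auto|]. apply cross_nz; auto. }
      assert (Orth : forall a b, In a (map fst r) -> In b (map fst r) -> a <> b -> I_of A a b c ->
                dot (x c) (cross (Br a) (Br b)) = C0).
      { intros a b Ha Hb Hab HI. rewrite (proj2 (Pnz a b Ha Hb Hab)), dot_scale_r, <- det3_dotcross.
        rewrite (proj2 (Sx3 a b c (Hrn a Ha) (Hrn b Hb) Hcn Hab ltac:(intro; subst; contradiction) ltac:(intro; subst; contradiction)) HI).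
        ring. }
      destruct s as [|a b|a b a' b']; simpl in Sok.
      - exists (x c), C1; split; [exact C1_neq_C0|]. destruct (x c); apply V_ext; unfold vscale; simpl; unfold C1; apply C_ext; simpl; ring.
      - destruct Sok as [Ha [Hb [Hab HI]]].
        destruct (solve_cross (cross (Br a) (Br b)) (x c) (proj1 (Pnz a b Ha Hb Hab))) as [w Hw].
        + apply Orth; auto.
        + exists w, C1; split; [exact C1_neq_C0|]. simpl; rewrite Hw.
          destruct (x c); apply V_ext; unfold vscale; simpl; unfold C1; apply C_ext; simpl; ring.
      - destruct Sok as [Ha [Hb [Hab [HI [Ha' [Hb' [Hab' [HI' Hno]]]]]]]].
        set (P := cross (Br a) (Br b)). set (Q := cross (Br a') (Br b')).
        destruct (Pnz a b Ha Hb Hab) as [PN PE]. destruct (Pnz a' b' Ha' Hb' Hab') as [QN QE].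
        assert (ZN : vnz (cross P Q)).
        { intro Z0. assert (Z : cross P Q = vzero) by (destruct Z0 as [? [? ?]]; apply V_ext; auto). apply Hno.
          assert (SPQ : same_point P Q) by (apply same_of_cross; auto).
          destruct SPQ as [k [Hk EQ]].
          assert (Gen : forall e, In e (map fst r) -> dot (Br e) Q = C0 -> I_of A a b e).
          { intros e He HeQ. rewrite EQ, dot_scale_r in HeQ.
            destruct (Cmul_integral _ _ HeQ) as [|HeP]; [contradiction|].
            destruct (Nat.eq_dec e a) as [->|Nea]; [apply (I_rep n A a b HA); auto|].
            destruct (Nat.eq_dec e b) as [->|Neb]; [apply (I_rep n A a b HA); auto|].
            apply (proj1 (Sx3 a b e (Hrn a Ha) (Hrn b Hb) (Hrn e He) Hab (fun E => Neb (eq_sym E)) (fun E => Nea (eq_sym E)))).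
            unfold P in HeP. rewrite <- det3_dotcross in HeP.
            destruct (Hr a Ha) as [La Ea]; destruct (Hr b Hb) as [Lb Eb]; destruct (Hr e He) as [Le Ee].
            unfold Br in HeP. rewrite Ea, Eb, Ee, det_scale in HeP.
            destruct (Cmul_integral _ _ HeP) as [Z2|]; auto.
            exfalso; revert Z2; repeat apply Cmul_neq0; auto. }
          split; apply Gen; auto; unfold Q; [apply dot_self_cross | apply dot_self_cross2]. }
        assert (SC : same_point (x c) (cross P Q)).
        { apply same_of_cross; auto. apply cross_cross_orth.
          - apply Orth; auto.
          - apply Orth; auto. }
        destruct SC as [lc [Hlc Elc]].
        exists (th0 c), lc; split; auto. }
    destruct Key as [w [lc [Hlc Ew]]].
    exists (fun i => if Nat.eqb i c then w else th0 i), (fun i => if Nat.eqb i c then lc else lam0 i).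
    assert (Agree : build r (fun i => if Nat.eqb i c then w else th0 i) = Br).
    { apply functional_extensionality; apply build_agree. intros i Hi.
      destruct (Nat.eqb_spec i c); [subst; contradiction|reflexivity]. }
    intros i Hi. destruct (Nat.eqb_spec i c) as [->|Ne].
    + split; auto. rewrite build_eq, Agree, Nat.eqb_refl. exact Ew.
    + rewrite build_ne by auto. rewrite Agree. apply Hr. simpl in Hi; destruct Hi; [congruence|auto].
Qed.

Definition three_pts (A : Config) (J : nat -> Prop) (h : nat) : Prop :=
  exists p1 p2 p3 : vec3,
    ~ same_point p1 p2 /\ ~ same_point p2 p3 /\ ~ same_point p1 p3 /\
    in_mult A J p1 /\ on_line p1 (A h) /\
    in_mult A J p2 /\ on_line p2 (A h) /\
    in_mult A J p3 /\ on_line p3 (A h).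

Lemma pick_two (A : Config) (J : nat -> Prop) h p : in_mult A J p ->
  exists a b, J a /\ J b /\ a <> b /\ a <> h /\ b <> h /\ on_line p (A a) /\ on_line p (A b).
Proof.
  intros [_ [i [j [k [Ji [Jj [Jk [Hij [Hjk [Hik [Oi [Oj Ok]]]]]]]]]]]].
  destruct (Nat.eq_dec i h) as [->|Ni].
  - exists j, k; repeat split; auto.
  - destruct (Nat.eq_dec j h) as [->|Nj].
    + exists i, k; repeat split; auto.
    + exists i, j; repeat split; auto.
Qed.

Lemma spec_exists (n : nat) (A : Config) (h : nat) (l R : list nat) :
  is_arrangement n A -> (forall i, In i l -> (i < n)%nat) -> In h l ->
  (forall x, In x R <-> In x l /\ x <> h) ->
  ~ three_pts A (fun i => In i l) h ->
  exists s, spec_ok A h s R /\ cover A h s R.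
Proof.
  intros HA Hl Hh HR Hno.
  set (J := fun i => In i l).
  set (M := fun p => in_mult A J p /\ on_line p (A h)).
  assert (F : forall a' b', In a' R -> In b' R -> a' <> b' -> I_of A a' b' h ->
            exists p', M p' /\ on_line p' (A a') /\ on_line p' (A b')).
  { intros a' b' Ha' Hb' Hab [p [Hp [O1 [O2 O3]]]].
    apply HR in Ha'; apply HR in Hb'.
    exists p; split; [split|]; auto. split; auto.
    exists a', b', h; unfold J; repeat split; tauto. }
  destruct (classic (exists p, M p)) as [[p1 Mp1]|NoM].
  2:{ exists SP0; split; [exact I|]. intros a' b' Ha' Hb' Hab HI.
      destruct (F a' b' Ha' Hb' Hab HI) as [p' [Mp' _]]. exfalso; apply NoM; eauto. }
  destruct Mp1 as [IM1 O1].
  destruct (pick_two A J h p1 IM1) as [a [b [Ja [Jb [Hab [Hah [Hbh [Oa Ob]]]]]]]].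
  assert (Ra : In a R) by (apply HR; auto). assert (Rb : In b R) by (apply HR; auto).
  assert (vp1 : vnz p1) by (destruct IM1; auto).
  destruct (classic (exists p2, M p2 /\ ~ same_point p1 p2)) as [[p2 [[IM2 O2] N12]]|No2].
  - destruct (pick_two A J h p2 IM2) as [a' [b' [Ja' [Jb' [Hab' [Hah' [Hbh' [Oa' Ob']]]]]]]].
    assert (vp2 : vnz p2) by (destruct IM2; auto).
    exists (SP2 a b a' b'); split.
    + simpl. repeat split; auto; try (apply HR; auto).
      * exists p1; tauto.
      * exists p2; tauto.
      * intros [[q [vq [Q1 [Q2 Q3]]]] [r [vr [R1 [R2 R3]]]]].
        destruct HA as [Hnz Hd].
        assert (Sq : same_point p1 q) by (apply (unique_inter (A a) (A b)); auto).
        assert (Sr : same_point p1 r) by (apply (unique_inter (A a) (A b)); auto).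
        apply N12. apply (unique_inter (A a') (A b')); auto.
        -- apply on_line_same with q; auto.
        -- apply on_line_same with r; auto.
    + intros x y Hx Hy Hxy HI. destruct (F x y Hx Hy Hxy HI) as [p' [[IM' O'] [Ox Oy]]].
      destruct (classic (same_point p1 p')) as [S1|S1].
      * exists a, b; simpl; split; [left; auto|].
        split; exists p1; repeat split; auto; apply on_line_same with p'; auto.
      * destruct (classic (same_point p2 p')) as [S2|S2].
        -- exists a', b'; simpl; split; [right; auto|].
           split; exists p2; repeat split; auto; apply on_line_same with p'; auto.
        -- exfalso; apply Hno. exists p1, p2, p'; tauto.
  - exists (SP1 a b); split.
    + simpl; repeat split; auto. exists p1; tauto.
    + intros x y Hx Hy Hxy HI. destruct (F x y Hx Hy Hxy HI) as [p' [Mp' [Ox Oy]]].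
      assert (S1 : same_point p1 p') by (apply NNPP; intro; apply No2; eauto).
      exists a, b; simpl; split; [auto|].
      split; exists p1; repeat split; auto; apply on_line_same with p'; auto.
Qed.

Lemma extract (n : nat) (A : Config) :
  is_arrangement n A ->
  (forall J : nat -> Prop, (forall i, J i -> (i < n)%nat) -> (exists i, J i) ->
     exists h, J h /\ ~ three_pts A J h) ->
  forall m l, (length l <= m)%nat -> (forall i, In i l -> (i < n)%nat) ->
  exists ord, valid A ord /\ (forall i, In i (map fst ord) <-> In i l).
Proof.
  intros HA NC. induction m; intros l Hlen Hl.
  - destruct l; [|simpl in Hlen; lia]. exists nil; simpl; tauto.
  - destruct l as [|x0 l0].
    + exists nil; simpl; tauto.
    + set (l := x0 :: l0) in *.
      destruct (NC (fun i => In i l) Hl (ex_intro _ x0 (or_introl eq_refl))) as [h [Hh Hno]].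
      set (R := remove Nat.eq_dec h l).
      assert (HR : forall x, In x R <-> In x l /\ x <> h).
      { intro x; split; [apply in_remove| intros [H1 H2]; apply in_in_remove; auto]. }
      assert (LR : (length R < length l)%nat) by (apply remove_length_lt; auto).
      destruct (IHm R ltac:(lia) (fun i Hi => Hl i (proj1 (proj1 (HR i) Hi)))) as [r [Vr Er]].
      destruct (spec_exists n A h l (map fst r) HA Hl Hh
                  (fun x => iff_trans (Er x) (HR x)) Hno) as [s [Sok Cov]].
      exists ((h, s) :: r); split.
      * simpl; repeat split; auto. intro Hin. apply Er, HR in Hin. tauto.
      * intro i; simpl; rewrite Er, HR. split.
        -- intros [E|[H1 H2]]; [subst; auto|auto].
        -- intro Hi. destruct (Nat.eq_dec h i); [left; auto|right; auto].
Qed.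

Definition tht (thp thq : nat -> vec3) (t : C) : nat -> vec3 :=
  fun i => vadd (thp i) (vscale t (vsub (thq i) (thp i))).

Lemma is_Pv_const (v : vec3) : is_Pv (fun _ => v).
Proof. repeat split; apply is_P_const. Qed.

Lemma is_Pv_tht thp thq i : is_Pv (fun t => tht thp thq t i).
Proof.
  unfold tht, vadd, vscale, vsub; simpl; repeat split;
  apply is_P_add; try apply is_P_const; apply is_P_mul; try apply is_P_id; apply is_P_const.
Qed.

Lemma build_poly (ord : list (nat * spec)) thp thq :
  forall i, is_Pv (fun t => build ord (tht thp thq t) i).
Proof.
  induction ord as [|[c s] r IH]; intro i; simpl.
  - apply is_Pv_const.
  - destruct (Nat.eqb i c).
    + destruct s; simpl.
      * apply is_Pv_tht.
      * apply is_Pv_cross; [apply is_Pv_cross; apply IH| apply is_Pv_tht].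
      * apply is_Pv_cross; apply is_Pv_cross; apply IH.
    + apply IH.
Qed.

Lemma tht_0 thp thq : tht thp thq C0 = thp.
Proof. apply functional_extensionality; intro i; unfold tht; destruct (thp i), (thq i); apply V_ext; simpl; ring. Qed.
Lemma tht_1 thp thq : tht thp thq C1 = thq.
Proof. apply functional_extensionality; intro i; unfold tht; destruct (thp i), (thq i); apply V_ext; simpl; unfold C1; apply C_ext; simpl; ring. Qed.

Definition contC (h : R -> C) : Prop :=
  forall x, continuity_pt (fun u => fst (h u)) x /\ continuity_pt (fun u => snd (h u)) x.

Lemma cp_plus f g x : continuity_pt f x -> continuity_pt g x -> continuity_pt (fun u => f u + g u) x.
Proof. intros; apply (continuity_pt_plus f g x); auto. Qed.
Lemma cp_minus f g x : continuity_pt f x -> continuity_pt g x -> continuity_pt (fun u => f u - g u) x.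
Proof. intros; apply (continuity_pt_minus f g x); auto. Qed.
Lemma cp_mult f g x : continuity_pt f x -> continuity_pt g x -> continuity_pt (fun u => f u * g u) x.
Proof. intros; apply (continuity_pt_mult f g x); auto. Qed.
Lemma cp_const (c x : R) : continuity_pt (fun _ => c) x.
Proof. apply continuity_pt_const; intros ? ?; reflexivity. Qed.
Lemma cp_id x : continuity_pt (fun u => u) x.
Proof. apply derivable_continuous_pt, derivable_pt_id. Qed.

Lemma poly_cont (d : nat) : forall (f : C -> C) (g : R -> C), is_poly d f -> contC g -> contC (fun u => f (g u)).
Proof.
  induction d; intros f g Hf Hg.
  - simpl in Hf. assert (E : (fun u => f (g u)) = (fun _ => f C0)) by (apply functional_extensionality; auto).
    rewrite E; intro x; split; apply cp_const.
  - destruct Hf as [c [q [Hq Ef]]].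
    assert (E : (fun u => f (g u)) = (fun u => Cadd c (Cmul (g u) (q (g u))))) by (apply functional_extensionality; auto).
    rewrite E. intro x. destruct (IHd q g Hq Hg x) as [Q1 Q2]. destruct (Hg x) as [G1 G2].
    unfold Cadd, Cmul; simpl; split;
    apply cp_plus; try apply cp_const; first [apply cp_minus | apply cp_plus]; apply cp_mult; auto.
Qed.

Lemma P_cont (f : C -> C) (g : R -> C) : is_P f -> contC g -> contC (fun u => f (g u)).
Proof. intros [d Hd]; apply poly_cont with d; auto. Qed.

Definition sig2 (u : R) : R := sin u * sin u.

Lemma gam_cont (s : R) : contC (fun u => gam s (sig2 u)).
Proof.
  intro x. unfold gam, sig2; simpl.
  assert (Hs : continuity_pt sin x) by apply continuity_sin.
  split.
  - apply cp_mult; auto.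
  - apply cp_mult; [apply cp_mult; [apply cp_const| apply cp_mult; auto]|].
    apply cp_minus; [apply cp_const| apply cp_mult; auto].
Qed.

Lemma sig2_range (u : R) : 0 <= sig2 u <= 1.
Proof.
  unfold sig2. pose proof (sin2_cos2 u) as H. unfold Rsqr in H.
  split; nra.
Qed.

Definition loc (x : R) (P : R -> Prop) : Prop :=
  exists d, 0 < d /\ forall w, Rabs (w - x) < d -> P w.

Lemma loc_and x P Q : loc x P -> loc x Q -> loc x (fun w => P w /\ Q w).
Proof.
  intros [d1 [H1 P1]] [d2 [H2 Q1]]. exists (Rmin d1 d2); split.
  - apply Rmin_pos; auto.
  - intros w Hw; split; [apply P1| apply Q1]; eapply Rlt_le_trans; eauto; [apply Rmin_l| apply Rmin_r].
Qed.

Lemma loc_fin x (m : nat) (P : nat -> R -> Prop) : (forall i, (i < m)%nat -> loc x (P i)) ->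
  loc x (fun w => forall i, (i < m)%nat -> P i w).
Proof.
  induction m; intro H.
  - exists 1; split; [lra| intros; lia].
  - destruct (loc_and x _ _ (IHm (fun i Hi => H i ltac:(lia))) (H m ltac:(lia))) as [d [Hd Pd]].
    exists d; split; auto. intros w Hw i Hi. destruct (Pd w Hw) as [A1 A2].
    destruct (Nat.eq_dec i m); [subst; auto| apply A1; lia].
Qed.

Lemma cont_loc (r : R -> R) x eps : continuity_pt r x -> 0 < eps -> loc x (fun w => Rabs (r x - r w) < eps).
Proof.
  intros Hc He. destruct (Hc eps He) as [d [Hd Hw]]. exists d; split; auto.
  intros w Hwx. destruct (Req_dec w x) as [->|Ne].
  - unfold Rminus; rewrite Rplus_opp_r, Rabs_R0; auto.
  - rewrite Rabs_minus_sym. apply Hw. split; [split; [exact I| intro E; apply Ne; auto]|exact Hwx].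
Qed.

Definition vcont (f : R -> vec3) : Prop :=
  contC (fun u => v0 (f u)) /\ contC (fun u => v1 (f u)) /\ contC (fun u => v2 (f u)).

Lemma vclose_loc (f : R -> vec3) x eps : vcont f -> 0 < eps -> loc x (fun w => vclose eps (f x) (f w)).
Proof.
  intros [A0 [A1 A2]] He; unfold vclose, Cclose.
  destruct (A0 x) as [a b]. destruct (A1 x) as [c d]. destruct (A2 x) as [e g].
  repeat apply loc_and; first [exact (cont_loc _ x eps a He) | exact (cont_loc _ x eps b He) | exact (cont_loc _ x eps c He) | exact (cont_loc _ x eps d He) | exact (cont_loc _ x eps e He) | exact (cont_loc _ x eps g He)].
Qed.

Lemma connect_contra (n : nat) (S U V : Config -> Prop) (pi : R -> Config) (a b : R) :
  a < b -> cfg_open n U -> cfg_open n V ->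
  (forall x, S x -> U x \/ V x) -> (forall x, S x -> U x -> V x -> False) ->
  (forall u, S (pi u)) ->
  (forall i, (i < n)%nat -> vcont (fun u => pi u i)) ->
  U (pi a) -> V (pi b) -> False.
Proof.
  intros Hab HU HV Hcov Hdis HS Hc Ua Vb.
  set (h := fun u => if excluded_middle_informative (U (pi u)) then -1 else 1).
  assert (Close : forall x eps, 0 < eps -> loc x (fun w => cfg_close n eps (pi x) (pi w))).
  { intros x eps He. apply (loc_fin x n (fun i w => vclose eps (pi x i) (pi w i))).
    intros i Hi. apply (vclose_loc (fun u => pi u i)); auto. }
  assert (Loc : forall x, loc x (fun w => h w = h x)).
  { intro x. destruct (excluded_middle_informative (U (pi x))) as [Ux|Nx].
    - destruct (HU _ Ux) as [eps [He Heps]]. destruct (Close x eps He) as [d [Hd Pd]].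
      exists d; split; auto; intros w Hw. unfold h.
      destruct (excluded_middle_informative (U (pi w))); destruct (excluded_middle_informative (U (pi x))); try tauto.
      exfalso; apply n0, Heps, Pd; auto.
    - assert (Vx : V (pi x)) by (destruct (Hcov _ (HS x)); tauto).
      destruct (HV _ Vx) as [eps [He Heps]]. destruct (Close x eps He) as [d [Hd Pd]].
      exists d; split; auto; intros w Hw. unfold h.
      destruct (excluded_middle_informative (U (pi w))) as [Uw|]; destruct (excluded_middle_informative (U (pi x))); try tauto.
      exfalso; apply (Hdis _ (HS w) Uw), Heps, Pd; auto. }
  assert (Hcont : continuity h).
  { intro x. destruct (Loc x) as [d [Hd Pd]]. intros eps He. exists d; split; auto.
    intros w [_ Hw]. simpl in *. unfold R_dist in *. rewrite Pd; auto.
    unfold Rminus; rewrite Rplus_opp_r, Rabs_R0; auto. }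
  assert (ha : h a < 0).
  { unfold h; destruct (excluded_middle_informative (U (pi a))); [lra| tauto]. }
  assert (hb : 0 < h b).
  { unfold h; destruct (excluded_middle_informative (U (pi b))) as [Ub|]; [exfalso; apply (Hdis _ (HS b)); auto| lra]. }
  destruct (IVT h a b Hcont Hab ha hb) as [z [_ Hz]].
  unfold h in Hz; destruct (excluded_middle_informative (U (pi z))); lra.
Qed.

Definition Gcfg (n : nat) (A : Config) (X : Config) : Prop :=
  (forall i, (i < n)%nat -> vnz (X i)) /\
  (forall i j, (i < n)%nat -> (j < n)%nat -> i <> j -> vnz (cross (X i) (X j))) /\
  (forall i j k, (i < n)%nat -> (j < n)%nat -> (k < n)%nat -> i <> j -> j <> k -> i <> k ->
     ~ I_of A i j k -> det3 (X i) (X j) (X k) <> C0).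

Lemma G_S (n : nat) (A : Config) ord th :
  valid A ord -> (forall i, In i (map fst ord) <-> (i < n)%nat) ->
  Gcfg n A (build ord th) -> realization_space n (I_of A) (build ord th).
Proof.
  intros V HR [G1 [G2 G3]]. split; [auto|split].
  - intros i j Hi Hj Hij Hs. apply (G2 i j Hi Hj Hij). rewrite (cross_of_same _ _ Hs).
    unfold vzero; simpl; tauto.
  - intros i j k Hi Hj Hk Hij Hjk Hik; split.
    + intro D. apply NNPP; intro NI. exact (G3 i j k Hi Hj Hk Hij Hjk Hik NI D).
    + intro HI. apply (build_det A); auto; try (apply HR; auto).
      intros a b Ha Hb Hab; apply G2; auto; apply HR; auto.
Qed.

Lemma G_of_scaled (n : nat) (A x X : Config) (lam : nat -> C) :
  realization_space n (I_of A) x ->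
  (forall i, (i < n)%nat -> lam i <> C0 /\ X i = vscale (lam i) (x i)) -> Gcfg n A X.
Proof.
  intros [S1 [S2 S3]] H. split; [|split].
  - intros i Hi; destruct (H i Hi) as [L E]; rewrite E; apply vnz_scale; auto.
  - intros i j Hi Hj Hij; destruct (H i Hi) as [Li Ei]; destruct (H j Hj) as [Lj Ej].
    rewrite Ei, Ej, cross_scale. apply vnz_scale; [apply Cmul_neq0; auto|]. apply cross_nz; auto.
  - intros i j k Hi Hj Hk Hij Hjk Hik NI.
    destruct (H i Hi) as [Li Ei]; destruct (H j Hj) as [Lj Ej]; destruct (H k Hk) as [Lk Ek].
    rewrite Ei, Ej, Ek, det_scale. apply Cmul_neq0; [repeat apply Cmul_neq0; auto|].
    intro D; apply NI; apply (S3 i j k); auto.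
Qed.

Lemma U_of_scaled (n : nat) (U : Config -> Prop) (x X : Config) (lam : nat -> C) :
  cfg_open n U -> saturated n U -> U x ->
  (forall i, (i < n)%nat -> lam i <> C0 /\ X i = vscale (lam i) (x i)) -> U X.
Proof.
  intros Ho Hs Ux H.
  assert (U1 : U (fun i => vscale (lam i) (x i))) by (apply (Hs x lam); auto; intros i Hi; apply H; auto).
  destruct (Ho _ U1) as [eps [He Pe]]. apply Pe. intros i Hi.
  destruct (H i Hi) as [_ E]; rewrite E. unfold vclose, Cclose.
  unfold Rminus; rewrite !Rplus_opp_r, !Rabs_R0. repeat split; auto.
Qed.

Lemma gam_0 s : gam s 0 = C0.
Proof. unfold gam, C0; apply C_ext; simpl; ring. Qed.
Lemma gam_1 s : gam s 1 = C1.
Proof. unfold gam, C1; apply C_ext; simpl; ring. Qed.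

Theorem mainTheorem4 (n : nat) (A : Config) :
  is_arrangement n A ->
  disconnected n (realization_space n (I_of A)) ->
  exists J : nat -> Prop,
    (forall i, J i -> (i < n)%nat) /\ (exists i, J i) /\
    forall h, J h ->
      exists p1 p2 p3 : vec3,
        ~ same_point p1 p2 /\ ~ same_point p2 p3 /\ ~ same_point p1 p3 /\
        in_mult A J p1 /\ on_line p1 (A h) /\
        in_mult A J p2 /\ on_line p2 (A h) /\
        in_mult A J p3 /\ on_line p3 (A h).
Proof.
  intros HA Hdis. apply NNPP; intro Hnot.
  assert (NC : forall J : nat -> Prop, (forall i, J i -> (i < n)%nat) -> (exists i, J i) ->
     exists h, J h /\ ~ three_pts A J h).
  { intros J H1 H2. apply NNPP; intro H3. apply Hnot. exists J; split; auto; split; auto.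
    intros h Jh. apply NNPP; intro H4. apply H3. exists h; split; auto. }
  destruct (extract n A HA NC n (seq 0 n) ltac:(rewrite length_seq; lia)
              (fun i Hi => proj2 (proj1 (in_seq n 0 i) Hi))) as [ord [Vo Eo]].
  assert (HR : forall i, In i (map fst ord) <-> (i < n)%nat).
  { intro i; rewrite Eo, in_seq; lia. }
  destruct Hdis as [U [V [HUo [HVo [HUs [HVs [Hcov [Hdisj [[x [Sx Ux]] [y [Sy Vy]]]]]]]]]]].
  destruct (build_surj n A x ord HA Sx Vo (fun i Hi => proj1 (HR i) Hi)) as [thp [lamp Hp]].
  destruct (build_surj n A y ord HA Sy Vo (fun i Hi => proj1 (HR i) Hi)) as [thq [lamq Hq]].
  assert (Hp' : forall i, (i < n)%nat -> lamp i <> C0 /\ build ord thp i = vscale (lamp i) (x i))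
    by (intros; apply Hp, HR; auto).
  assert (Hq' : forall i, (i < n)%nat -> lamq i <> C0 /\ build ord thq i = vscale (lamq i) (y i))
    by (intros; apply Hq, HR; auto).
  assert (Gp : Gcfg n A (build ord thp)) by exact (G_of_scaled n A x _ lamp Sx Hp').
  assert (Gq : Gcfg n A (build ord thq)) by exact (G_of_scaled n A y _ lamq Sy Hq').
  set (Xt := fun t => build ord (tht thp thq t)).
  assert (X0 : Xt C0 = build ord thp) by (unfold Xt; rewrite tht_0; reflexivity).
  assert (X1 : Xt C1 = build ord thq) by (unfold Xt; rewrite tht_1; reflexivity).
  assert (Thin : thin (fun t => ~ Gcfg n A (Xt t))).
  { destruct Gp as [G1 [G2 G3]].
    assert (T1 : thin (fun t => exists i, (i < n)%nat /\ ~ vnz (Xt t i))).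
    { apply thin_fin. intros i Hi. apply thin_vnz; [apply build_poly|]. rewrite X0; auto. }
    assert (T2 : thin (fun t => exists i, (i < n)%nat /\ exists j, (j < n)%nat /\
                   i <> j /\ ~ vnz (cross (Xt t i) (Xt t j)))).
    { apply thin_fin; intros i Hi. apply thin_fin; intros j Hj.
      destruct (Nat.eq_dec i j) as [E|Ne].
      - eapply thin_mono; [apply thin_empty| intros t [N _]; auto].
      - eapply thin_mono; [apply (thin_vnz (fun t => cross (Xt t i) (Xt t j)))| intros t [_ N]; exact N].
        + apply is_Pv_cross; apply build_poly.
        + rewrite X0; auto. }
    assert (T3 : thin (fun t => exists i, (i < n)%nat /\ exists j, (j < n)%nat /\ exists k, (k < n)%nat /\
                   (i <> j /\ j <> k /\ i <> k /\ ~ I_of A i j k) /\ det3 (Xt t i) (Xt t j) (Xt t k) = C0)).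
    { apply thin_fin; intros i Hi. apply thin_fin; intros j Hj. apply thin_fin; intros k Hk.
      destruct (classic (i <> j /\ j <> k /\ i <> k /\ ~ I_of A i j k)) as [Cd|Cd].
      - eapply thin_mono; [apply (thin_zero (fun t => det3 (Xt t i) (Xt t j) (Xt t k)))| intros t [_ D]; exact D].
        + apply is_P_det; apply build_poly.
        + rewrite X0. destruct Cd as [a [b [c d]]]. apply G3; auto.
      - eapply thin_mono; [apply thin_empty| intros t [D _]; auto]. }
    eapply thin_mono; [apply (thin_union _ _ (thin_union _ _ T1 T2) T3)|].
    intros t NG. apply NNPP; intro NB. apply NG. split; [|split].
    - intros i Hi. apply NNPP; intro N. apply NB; left; left; eauto.
    - intros i j Hi Hj Hij. apply NNPP; intro N. apply NB; left; right; exists i; split; auto; exists j; auto.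
    - intros i j k Hi Hj Hk Hij Hjk Hik NI D. apply NB; right. exists i; split; auto; exists j; split; auto; exists k; split; auto. }
  destruct (avoid _ Thin) as [s Hs].
  set (pi := fun u => Xt (gam s (sig2 u))).
  assert (Spi : forall u, realization_space n (I_of A) (pi u)).
  { intro u. unfold pi, Xt. apply G_S; auto. fold (Xt (gam s (sig2 u))).
    destruct (sig2_range u) as [[L0|E0] [L1|E1]].
    - apply NNPP. apply (Hs (sig2 u)); auto.
    - rewrite E1, gam_1, X1; auto.
    - rewrite <- E0, gam_0, X0; auto.
    - rewrite <- E0, gam_0, X0; auto. }
  apply (connect_contra n (realization_space n (I_of A)) U V pi 0 (PI / 2) PI2_RGT_0 HUo HVo Hcov Hdisj Spi).
  - intros i Hi. pose proof (build_poly ord thp thq i) as [B0 [B1 B2]].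
    split; [|split].
    + exact (P_cont _ _ B0 (gam_cont s)).
    + exact (P_cont _ _ B1 (gam_cont s)).
    + exact (P_cont _ _ B2 (gam_cont s)).
  - unfold pi. replace (sig2 0) with 0 by (unfold sig2; rewrite sin_0; ring).
    rewrite gam_0, X0. exact (U_of_scaled n U x _ lamp HUo HUs Ux Hp').
  - unfold pi. replace (sig2 (PI / 2)) with 1 by (unfold sig2; rewrite sin_PI2; ring).
    rewrite gam_1, X1. exact (U_of_scaled n V y _ lamq HVo HVs Vy Hq').
Qed.
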